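(* For every $n\ge1$ and every $\sigma\in S_n$, $$\mathrm{lsg(op)}(\sigma)+\mathrm{rsg(op)}(\sigma)=\mathrm{lsg(clos)}(\sigma)+\mathrm{rsg(clos)}(\sigma).$$
   Context: A permutation $\sigma\in S_n$ is written as the word $\sigma(1)\cdots\sigma(n)$; its runs are the maximal contiguous increasing segments. A run of length $\ge2$ is proper. $\mathrm{op}(\sigma)$ is the set of first elements of proper runs, $\mathrm{clos}(\sigma)$ the set of last elements of proper runs. For $i\in\{1,\dots,n\}$, $\mathrm{lsg}(i)$ is the number of runs lying strictly to the left of $i$ (not containing $i$) that contain both an element smaller and an element greater than $i$; $\mathrm{rsg}(i)$ is the analogous number to the right. $\mathrm{lsg}(X)(\sigma)=\sum_{i\in X(\sigma)}\mathrm{lsg}(i)$, $\mathrm{rsg}(X)(\sigma)=\sum_{i\in X(\sigma)}\mathrm{rsg}(i)$ for $X\in\{\mathrm{op},\mathrm{clos}\}$. *)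

(* Defs.v *)
From mathcomp Require Import all_boot all_fingroup.
Set Implicit Arguments. Unset Strict Implicit. Unset Printing Implicit Defensive.

(* The one-line word sigma(1) ... sigma(n) of sigma : 'S_n, with values in {1..n}
   ('I_n = {0..n-1} is shifted by one). *)
Definition word n (s : 'S_n) : seq nat := [seq (s i).+1 | i <- enum 'I_n].

Fixpoint runs (w : seq nat) : seq (seq nat) :=
  match w with
  | [::] => [::]
  | x :: w' =>
      match runs w' with
      | (y :: r) :: rs => if x < y then (x :: y :: r) :: rs else [:: x] :: (y :: r) :: rs
      | _ => [:: [:: x]]
      end
  end.

Definition proper_runs (w : seq nat) := [seq r <- runs w | 2 <= size r].

Definition op_set (w : seq nat) : seq nat := [seq head 0 r | r <- proper_runs w].
Definition clos_set (w : seq nat) : seq nat := [seq last 0 r | r <- proper_runs w].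

Definition run_index (w : seq nat) (i : nat) : nat := find (fun r => i \in r) (runs w).

Definition straddles (i : nat) (r : seq nat) : bool :=
  has (fun x => x < i) r && has (fun x => i < x) r.

Definition lsg (w : seq nat) (i : nat) : nat :=
  count (straddles i) (take (run_index w i) (runs w)).
Definition rsg (w : seq nat) (i : nat) : nat :=
  count (straddles i) (drop (run_index w i).+1 (runs w)).

Definition sum_lsg (w : seq nat) (X : seq nat) : nat := \sum_(i <- X) lsg w i.
Definition sum_rsg (w : seq nat) (X : seq nat) : nat := \sum_(i <- X) rsg w i.

Example runs_ex : runs [:: 3; 1; 4; 5; 2; 6] = [:: [:: 3]; [:: 1; 4; 5]; [:: 2; 6]].
Proof. by vm_compute. Qed.
Example lsg_ex : lsg [:: 3; 1; 4; 5; 2; 6] 2 = 1 /\ rsg [:: 1;4;5;3;2;6] 3 = 1.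
Proof. by vm_compute. Qed.

(* Main.v *)
Require Import Defs.
From mathcomp Require Import all_boot all_fingroup.
From mathcomp Require Import zify.
Set Implicit Arguments. Unset Strict Implicit.

Lemma runs_nonnil w : all (fun r => r != [::]) (runs w).
Proof.
elim: w => [|x w IH] //=.
move: IH; case: (runs w) => [|[|y r] rs] //=.
by move=> IH; case: ifP => _ //=.
Qed.

Lemma runs_flatten w : flatten (runs w) = w.
Proof.
elim: w => [|x w IH] //=.
have := runs_nonnil w.
move: IH; case: (runs w) => [|[|y r] rs] /=; first by move=> <-.
  by [].
move=> IH _; case: ifP => _ /=; by rewrite -IH.
Qed.

Lemma runs_sorted w : all (sorted ltn) (runs w).
Proof.
elim: w => [|x w IH] //=.
move: IH; case: (runs w) => [|[|y r] rs] //=.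
move=> /andP[Hyr Hrs]; case: ifP => Hxy /=; rewrite ?Hxy ?Hyr ?Hrs //.
Qed.

Lemma path_bounds a t : path ltn a t -> forall x, x \in a :: t -> a <= x <= last a t.
Proof.
elim: t a => [|b t IH] a /=.
  by move=> _ x; rewrite inE => /eqP ->; rewrite leqnn.
move=> /andP[Hab Hp] x; rewrite inE => /orP[/eqP ->|Hx].
  have /andP[_ H] := IH b Hp b (mem_head _ _).
  by rewrite leqnn /= (leq_trans (ltnW Hab) H).
have /andP[H1 H2] := IH b Hp x Hx.
by rewrite H2 (leq_trans (ltnW Hab) H1).
Qed.

Lemma straddlesE i a t : path ltn a t -> straddles i (a :: t) = (a < i) && (i < last a t).
Proof.
move=> Hp; rewrite /straddles.
apply/andP/andP => [[/hasP[x Hx Hxi] /hasP[y Hy Hiy]]|[Hai Hil]].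
  have /andP[H1 _] := path_bounds Hp Hx.
  have /andP[_ H2] := path_bounds Hp Hy.
  split; lia.
split; apply/hasP; [exists a; rewrite ?mem_head // | exists (last a t); rewrite ?mem_last //].
Qed.

Lemma flatten_disj (R : seq (seq nat)) x y z : uniq (flatten R) -> x \in R -> y \in R -> z \in x -> z \in y -> x = y.
Proof.
elim: R => [|r R IH] //=; rewrite cat_uniq => /and3P[_ Hd Hu].
rewrite !inE => /orP[/eqP ->|Hx] /orP[/eqP ->|Hy] Hzx Hzy //.
- case/negP: Hd; apply/hasP; exists z => //; apply/flattenP; by exists y.
- case/negP: Hd; apply/hasP; exists z => //; apply/flattenP; by exists x.
- exact: IH.
Qed.

Lemma lrsg_eq w r i : uniq w -> r \in runs w -> i \in r -> ~~ straddles i r ->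
  lsg w i + rsg w i = count (straddles i) (runs w).
Proof.
move=> Hu Hr Hi Hs; rewrite /lsg /rsg /run_index.
have Hh : has (fun r => i \in r) (runs w) by apply/hasP; exists r.
set k := find _ _.
have Hk : k < size (runs w) by rewrite -has_find.
have Hn : nth [::] (runs w) k = r.
  apply: (@flatten_disj (runs w) _ _ i); rewrite ?runs_flatten ?mem_nth //.
  exact: (nth_find [::] Hh).
by rewrite -[in RHS](cat_take_drop k (runs w)) count_cat (drop_nth [::] Hk) /= Hn (negbTE Hs) add0n.
Qed.

Lemma count_sum (T : Type) (a : pred T) s : count a s = \sum_(x <- s) (a x : nat).
Proof. by elim: s => [|x s IH]; rewrite ?big_nil ?big_cons //= IH. Qed.

Lemma sum_X w X : uniq w ->
  (forall i, i \in X -> exists2 r, r \in runs w & (i \in r) && ~~ straddles i r) ->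
  sum_lsg w X + sum_rsg w X = \sum_(r <- runs w) count (fun i => straddles i r) X.
Proof.
move=> Hu HX; rewrite /sum_lsg /sum_rsg -big_split /=.
rewrite (eq_big_seq (fun i => count (straddles i) (runs w))); last first.
  move=> i /HX [r Hr /andP[Hi Hs]]; exact: lrsg_eq Hu Hr Hi Hs.
rewrite (eq_bigr (fun i => \sum_(r <- runs w) (straddles i r : nat))); last by move=> i _; rewrite count_sum.
rewrite exchange_big /=; apply: eq_bigr => r _; by rewrite count_sum.
Qed.

Lemma sym_sum (P : seq (seq nat)) (F G : seq nat -> seq nat -> bool) :
  {in P &, forall x y, F x y + F y x = G x y + G y x} ->
  \sum_(x <- P) \sum_(y <- P) (F x y : nat) = \sum_(x <- P) \sum_(y <- P) (G x y : nat).
Proof.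
move=> H.
suff : \sum_(x <- P) \sum_(y <- P) (F x y : nat) + \sum_(x <- P) \sum_(y <- P) (F x y : nat) =
  \sum_(x <- P) \sum_(y <- P) (G x y : nat) + \sum_(x <- P) \sum_(y <- P) (G x y : nat) by lia.
rewrite [X in _ + X = _]exchange_big [X in _ = _ + X]exchange_big -!big_split /=.
apply: (@eq_big_seq nat 0 addn) => x Hx; rewrite -!big_split /=.
rewrite (eq_big_seq (fun y => (G x y : nat) + G y x)) // => y Hy; exact: H.
Qed.

Lemma restrict w (f : seq nat -> nat) :
  \sum_(r <- runs w) count (fun i => straddles i r) (map f (proper_runs w)) =
  \sum_(x <- proper_runs w) \sum_(y <- proper_runs w) (straddles (f y) x : nat).
Proof.
rewrite /proper_runs [RHS]big_filter [RHS]big_mkcond /=; apply: eq_big_seq => r Hr.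
rewrite count_map count_sum; case: ifP => // Hs; rewrite big1_seq // => y _.
have /allP/(_ r Hr) := runs_nonnil w; have /allP/(_ r Hr) := runs_sorted w.
case: r Hr Hs => [|a [|b t]] //= Hr _ _ _.
by rewrite /straddles /=; case: ltngtP.
Qed.

Lemma arith a la b lb : a != b -> a != lb -> la != b -> la != lb -> a <= la -> b <= lb ->
  ((a < b) && (b < la)) + ((b < a) && (a < lb)) = ((a < lb) && (lb < la)) + ((b < la) && (la < lb)) :> nat.
Proof.
move=> n1 n2 n3 n4 H1 H2.
case: (ltngtP a b) n1 => // Hab _; case: (ltngtP a lb) n2 => // Hal _;
case: (ltngtP la b) n3 => // Hlb _; case: (ltngtP la lb) n4 => // Hll _ /=; rewrite ?andbT ?andbF //=;
 try lia.
Qed.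

Lemma pointwise w x y : uniq w -> x \in proper_runs w -> y \in proper_runs w ->
  (straddles (head 0 y) x : nat) + straddles (head 0 x) y =
  (straddles (last 0 y) x : nat) + straddles (last 0 x) y.
Proof.
move=> Hu; rewrite !mem_filter => /andP[_ Hx] /andP[_ Hy].
have /allP/(_ x Hx) := runs_nonnil w; have /allP/(_ x Hx) := runs_sorted w.
have /allP/(_ y Hy) := runs_nonnil w; have /allP/(_ y Hy) := runs_sorted w.
have Hf : uniq (flatten (runs w)) by rewrite runs_flatten.
case: (eqVneq x y) => [<-|Hne].
  case: x {Hx Hy Hf} => [|a t] //= Hp _ _ _.
  by rewrite !straddlesE // !ltnn /= !andbF.
have D : forall z, z \in x -> z \in y -> False.
  by move=> z Hzx Hzy; move/eqP: Hne; apply; exact: (flatten_disj Hf Hx Hy Hzx Hzy).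
case: x Hx Hne D => [|a t] // Hx Hne D; case: y Hy Hne D => [|b u] // Hy Hne D /= Hpu _ Hpt _.
rewrite !straddlesE //.
have Ha := mem_head a t; have Hla := mem_last a t.
have Hb := mem_head b u; have Hlb := mem_last b u.
have /andP[_ Hab] := path_bounds Hpt Ha.
have /andP[_ Hbb] := path_bounds Hpu Hb.
have n1 : a != b by apply/eqP => E; apply: (D a) => //; rewrite E.
have n2 : a != last b u by apply/eqP => E; apply: (D a) => //; rewrite E.
have n3 : last a t != b by apply/eqP => E; apply: (D b) => //; rewrite -E.
have n4 : last a t != last b u by apply/eqP => E; apply: (D (last a t)) => //; rewrite E.
exact: arith.
Qed.

Theorem mainTheorem6 (n : nat) (s : 'S_n) : 1 <= n ->
  sum_lsg (word s) (op_set (word s)) + sum_rsg (word s) (op_set (word s)) =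
  sum_lsg (word s) (clos_set (word s)) + sum_rsg (word s) (clos_set (word s)).
Proof.
move=> _; set w := word s.
have Hu : uniq w.
  rewrite /w /word map_inj_uniq ?enum_uniq // => i j /succn_inj/val_inj; exact: perm_inj.
have Hmem : forall r, r \in proper_runs w -> r \in runs w /\ exists a t, r = a :: t /\ path ltn a t.
  move=> r; rewrite mem_filter => /andP[_ Hr]; split => //.
  have /allP/(_ r Hr) := runs_nonnil w; have /allP/(_ r Hr) := runs_sorted w.
  by case: r {Hr} => [|a t] //= Hp _; exists a, t.
rewrite /op_set /clos_set (sum_X Hu) ?(sum_X Hu) ?restrict.
- apply: sym_sum => x y Hx Hy; exact: pointwise Hu Hx Hy.
- move=> i /mapP[r /Hmem [Hr [a [t [Er Hp]]]] ->]; subst r; exists (a :: t) => //=.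
  by rewrite mem_last straddlesE // ltnn andbF.
- move=> i /mapP[r /Hmem [Hr [a [t [Er Hp]]]] ->]; subst r; exists (a :: t) => //=.
  by rewrite mem_head straddlesE // ltnn.
Qed.
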